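(* Let $\eta\geq 1$ and let $(\phi_n)_{n\in\mathbb N}$ be a family of real univariate polynomials with $\phi_n$ of degree $n$ for every $n$. Let $(\alpha^{m,n}_k)_{k,m,n\in\mathbb N}$ be its linearization coefficients, i.e. the real numbers with $\phi_m\phi_n=\sum_{k=0}^{m+n}\alpha^{m,n}_k\phi_k$ and $\alpha^{m,n}_k=0$ for $k>m+n$, and assume $$\sum_{k=0}^{m+n}\vert\alpha^{m,n}_k\vert = 1\qquad\text{for all } m,n\in\mathbb N.$$ Then for any $x,y\in\ell^1_\eta(\mathbb N,\mathbb C)$, the generalized convolution product $x\ast y$ defined by $(x\ast y)_k=\sum_{m=0}^\infty\sum_{n=0}^\infty x_m y_n\alpha^{m,n}_k$ ($k\in\mathbb N$) is well defined, belongs to $\ell^1_\eta(\mathbb N,\mathbb C)$, and $$\Vert x\ast y\Vert_{\ell^1_\eta}\leq \Vert x\Vert_{\ell^1_\eta}\Vert y\Vert_{\ell^1_\eta};$$ that is, $\ell^1_\eta(\mathbb N,\mathbb C)$ is a Banach algebra for $\ast$.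
   Context: For $\eta\geq1$, $\ell^1_\eta(\mathbb N,\mathbb C)$ denotes the space of complex sequences $x=(x_n)_{n\in\mathbb N}$ with $\Vert x\Vert_{\ell^1_\eta}:=\sum_{n\in\mathbb N}\vert x_n\vert\eta^n<\infty$. *)

(* Defs.v *)
From Stdlib Require Import Reals.
From Coquelicot Require Import Coquelicot.
From mathcomp Require Import all_boot all_algebra.
From mathcomp Require Import Rstruct.

Open Scope R_scope.

Definition in_l1_eta (eta : R) (x : nat -> C) : Prop :=
  ex_series (fun n => Cmod (x n) * eta ^ n).

Definition l1_eta_norm (eta : R) (x : nat -> C) : R :=
  Series (fun n => Cmod (x n) * eta ^ n).

Definition is_gen_conv (alpha : nat -> nat -> nat -> R) (x y z : nat -> C) : Prop :=
  forall k : nat, exists w : nat -> C,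
    (forall m : nat,
       is_series (fun n => (x m * y n * RtoC (alpha m n k))%C) (w m))
    /\ is_series w (z k).

(* Main.v *)
Require Import Defs.
From Stdlib Require Import Reals Lra Lia ClassicalEpsilon.
From Coquelicot Require Import Coquelicot.
From mathcomp Require Import all_boot all_algebra.
From mathcomp Require Import Rstruct.
Open Scope R_scope.

Lemma Series_ge0 (a : nat -> R) : (forall n, 0 <= a n) -> ex_series a -> 0 <= Series a.
Proof.
intros H He. replace 0 with (Series (fun n => 0 * a n)).
- apply Series_le; auto. intros n; split; [lra|]. rewrite Rmult_0_l; apply H.
- rewrite Series_scal_l; ring.
Qed.

Lemma Cseries_bound (a : nat -> C) (l : C) :
  is_series a l -> ex_series (fun n => Cmod (a n)) ->
  Cmod l <= Series (fun n => Cmod (a n)).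
Proof.
intros Hl He.
assert (H1 : is_lim_seq (fun N => Cmod (sum_n a N)) (Cmod l)).
{ apply (is_lim_seq_ext (fun N => @norm _ C_NormedModule (sum_n a N))).
  intros N; reflexivity.
  eapply filterlim_comp. exact Hl. apply (@filterlim_norm _ C_NormedModule). }
assert (H2 : is_lim_seq (sum_n (fun n => Cmod (a n))) (Series (fun n => Cmod (a n)))).
{ apply Series_correct in He. exact He. }
refine (is_lim_seq_le _ _ _ _ _ H1 H2).
clear. intros N. unfold sum_n. eapply Rle_trans. apply (@norm_sum_n_m _ C_NormedModule).
right. reflexivity.
Qed.

Lemma bounded_series (a : nat -> R) (B : R) :
  (forall n, 0 <= a n) -> (forall N, sum_n a N <= B) ->
  ex_series a /\ Series a <= B.
Proof.
intros Hp HB.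
assert (Hf : ex_finite_lim_seq (sum_n a)).
{ apply ex_finite_lim_seq_incr with B; auto.
  intros n. rewrite sum_Sn. unfold plus; simpl. specialize (Hp (S n)). lra. }
destruct Hf as [l Hl].
assert (Hs : is_series a l) by exact Hl.
split. exists l; exact Hs.
rewrite (is_series_unique _ _ Hs).
assert (H3 := is_lim_seq_le _ _ _ _ HB Hl (is_lim_seq_const B)). exact H3.
Qed.

Lemma Series_sum_n (f : nat -> nat -> R) (K : nat) :
  (forall k, ex_series (f k)) ->
  ex_series (fun n => sum_n (fun k => f k n) K) /\
  sum_n (fun k => Series (f k)) K = Series (fun n => sum_n (fun k => f k n) K).
Proof.
intros He. induction K as [|K [IH1 IH2]].
- rewrite sum_O. split.
  + eapply ex_series_ext; [|apply (He 0%nat)]. intros n; now rewrite sum_O.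
  + apply Series_ext. intros n; now rewrite sum_O.
- rewrite sum_Sn IH2. split.
  + eapply ex_series_ext; [|apply (ex_series_plus _ _ IH1 (He (S K)))].
    intros n; now rewrite sum_Sn.
  + unfold plus; simpl. rewrite <- Series_plus; auto.
    apply Series_ext. intros n; now rewrite sum_Sn.
Qed.

Lemma sum_mono (f : nat -> R) K d : (forall i, 0 <= f i) ->
  sum_f_R0 f K <= sum_f_R0 f (K + d)%coq_nat.
Proof.
intros Hp. induction d as [|d IH]. rewrite Nat.add_0_r; lra.
rewrite Nat.add_succ_r.
change (sum_f_R0 f (S (K+d)%coq_nat)) with (sum_f_R0 f (K+d)%coq_nat + f (S (K+d)%coq_nat)).
specialize (Hp (S (K+d)%coq_nat)). lra.
Qed.

Lemma sum_le_full (f : nat -> R) N : (forall i, 0 <= f i) ->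
  (forall i, (N < i)%coq_nat -> f i = 0) -> forall K, sum_f_R0 f K <= sum_f_R0 f N.
Proof.
intros Hp Hz K. destruct (Nat.le_gt_cases K N) as [h|h].
- replace N with (K + Nat.sub N K)%coq_nat by lia. apply sum_mono; auto.
- replace K with (N + Nat.sub K N)%coq_nat by lia. generalize (Nat.sub K N). intros d.
  induction d as [|d IH]. rewrite Nat.add_0_r; lra.
  rewrite Nat.add_succ_r.
  change (sum_f_R0 f (S (N+d)%coq_nat)) with (sum_f_R0 f (N+d)%coq_nat + f (S (N+d)%coq_nat)).
  rewrite Hz; [lra|lia].
Qed.

Lemma term_le_sum (f : nat -> R) N k : (forall i, 0 <= f i) ->
  (k <= N)%coq_nat -> f k <= sum_f_R0 f N.
Proof.
intros Hp Hk. induction N as [|N IH].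
- replace k with 0%nat by lia. simpl; lra.
- simpl. destruct (Nat.eq_dec k (S N)) as [->|h].
  + generalize (cond_pos_sum f N Hp); lra.
  + generalize (Hp (S N)); assert (f k <= sum_f_R0 f N) by (apply IH; lia). lra.
Qed.

Lemma exs_scal (c : R) (a : nat -> R) : ex_series a -> ex_series (fun n => c * a n).
Proof. intros H. apply ex_series_scal_r with (c:=c) in H. eapply ex_series_ext; [|exact H]. intros; simpl; ring. Qed.

Theorem lemma2p9 (eta : R) (phi : nat -> {poly R})
  (alpha : nat -> nat -> nat -> R) :
  Rle R1 eta ->
  (forall n : nat, size (phi n) = n.+1) ->
  (forall m n : nat,
     (phi m * phi n)%R = (\sum_(k < (m + n).+1) alpha m n k *: phi k)%R) ->
  (forall m n k : nat, (m + n < k)%N -> alpha m n k = R0) ->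
  (forall m n : nat, sum_f_R0 (fun k => Rabs (alpha m n k)) (m + n) = R1) ->
  forall x y : nat -> C,
    in_l1_eta eta x -> in_l1_eta eta y ->
    exists z : nat -> C,
      is_gen_conv alpha x y z /\
      in_l1_eta eta z /\
      Rle (l1_eta_norm eta z) (Rmult (l1_eta_norm eta x) (l1_eta_norm eta y)).
Proof.
intros Heta _ _ Hz Hs x y Hx Hy.
assert (Hp : forall n, 1 <= eta ^ n) by (intros; apply pow_R1_Rle; exact Heta).
assert (Hp0 : forall n, 0 <= eta ^ n) by (intros n; generalize (Hp n); lra).
pose Ax := fun m => Cmod (x m). pose Ay := fun n => Cmod (y n).
assert (HAx0 : forall m, 0 <= Ax m) by (intros; apply Cmod_ge_0).
assert (HAy0 : forall m, 0 <= Ay m) by (intros; apply Cmod_ge_0).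
assert (HAx : ex_series Ax).
{ apply (ex_series_le Ax (fun n => Cmod (x n) * eta ^ n)); [|exact Hx].
  intros n. change (Rabs (Ax n) <= Cmod (x n) * eta ^ n).
  rewrite Rabs_pos_eq; [|apply HAx0]. unfold Ax.
  generalize (Hp n) (Cmod_ge_0 (x n)); nra. }
assert (HAy : ex_series Ay).
{ apply (ex_series_le Ay (fun n => Cmod (y n) * eta ^ n)); [|exact Hy].
  intros n. change (Rabs (Ay n) <= Cmod (y n) * eta ^ n).
  rewrite Rabs_pos_eq; [|apply HAy0]. unfold Ay.
  generalize (Hp n) (Cmod_ge_0 (y n)); nra. }
assert (Hal : forall m n k, Rabs (alpha m n k) <= 1).
{ intros m n k. case: (leqP k (m + n)) => h.
  - apply Rle_trans with (sum_f_R0 (fun k => Rabs (alpha m n k)) (m + n)); [|rewrite Hs; lra].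
    apply (term_le_sum (fun k => Rabs (alpha m n k))).
    intros; apply Rabs_pos. by apply/leP.
  - rewrite Hz // Rabs_R0; lra. }
assert (Hsa : forall m n K, sum_f_R0 (fun k => Rabs (alpha m n k) * eta ^ k) K <= eta ^ (m + n)).
{ intros m n K.
  apply Rle_trans with (sum_f_R0 (fun k => Rabs (alpha m n k) * eta ^ (m + n)) K).
  - apply sum_Rle; intros k _. case: (leqP k (m + n)) => h.
    + apply Rmult_le_compat_l; [apply Rabs_pos|]. apply Rle_pow; auto. by apply/leP.
    + rewrite Hz // Rabs_R0; lra.
  - rewrite <- scal_sum.
    assert (H1 : sum_f_R0 (fun k => Rabs (alpha m n k)) K <= 1).
    { apply Rle_trans with (sum_f_R0 (fun k => Rabs (alpha m n k)) (m + n)); [|rewrite Hs; lra].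
      apply sum_le_full. intros; apply Rabs_pos.
      intros i hi. rewrite Hz. apply Rabs_R0. by apply/ltP. }
    generalize (Hp0 (m + n)%N) (cond_pos_sum (fun k => Rabs (alpha m n k)) K (fun _ => Rabs_pos _)).
    nra. }
pose c := fun k m n => Ax m * Ay n * Rabs (alpha m n k).
assert (Hc0 : forall k m n, 0 <= c k m n).
{ intros; unfold c. apply Rmult_le_pos; [apply Rmult_le_pos|apply Rabs_pos]; auto. }
assert (Hcle : forall k m n, c k m n <= Ax m * Ay n).
{ intros; unfold c. generalize (Hal m n k) (Rabs_pos (alpha m n k)) (Rmult_le_pos _ _ (HAx0 m) (HAy0 n)). nra. }
assert (Hterm : forall k m n, Cmod (x m * y n * RtoC (alpha m n k)) = c k m n).
{ intros; unfold c, Ax, Ay. rewrite !Cmod_mult Cmod_R. reflexivity. }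
assert (Hcex : forall k m, ex_series (c k m)).
{ intros k m. apply (ex_series_le (c k m) (fun n => Ax m * Ay n)).
  - intros n. change (Rabs (c k m n) <= Ax m * Ay n). rewrite Rabs_pos_eq; auto.
  - apply exs_scal, HAy. }
assert (Hw : forall k m, {l : C | is_series (fun n => (x m * y n * RtoC (alpha m n k))%C) l}).
{ intros k m. apply constructive_indefinite_description.
  apply (ex_series_le (V := C_CompleteNormedModule) _ (c k m)); [|apply Hcex].
  intros n. change (Cmod (x m * y n * RtoC (alpha m n k)) <= c k m n). rewrite Hterm; lra. }
pose w := fun k m => proj1_sig (Hw k m).
assert (Hwb : forall k m, Cmod (w k m) <= Series (c k m)).
{ intros k m. unfold w. destruct (Hw k m) as [l Hl]; simpl.
  rewrite -(Series_ext _ _ (Hterm k m)). apply Cseries_bound; auto.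
  eapply ex_series_ext; [|apply (Hcex k m)]. intros n; simpl; now rewrite Hterm. }
pose SY := Series Ay.
assert (HW : forall k m, Series (c k m) <= Ax m * SY).
{ intros k m. unfold SY. rewrite <- Series_scal_l. apply Series_le.
  intros n; split; auto. apply exs_scal, HAy. }
assert (HW0 : forall k m, 0 <= Series (c k m)).
{ intros; apply Series_ge0; auto. }
assert (HWex : forall k, ex_series (fun m => Series (c k m))).
{ intros k. apply (ex_series_le (fun m => Series (c k m)) (fun m => Ax m * SY)).
  - intros m. change (Rabs (Series (c k m)) <= Ax m * SY). rewrite Rabs_pos_eq; auto.
  - apply ex_series_scal_r, HAx. }
assert (Hz' : forall k, {l : C | is_series (w k) l}).
{ intros k. apply constructive_indefinite_description.
  apply (ex_series_le (V := C_CompleteNormedModule) _ (fun m => Series (c k m))); [|apply HWex].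
  intros m. change (Cmod (w k m) <= Series (c k m)). apply Hwb. }
pose z := fun k => proj1_sig (Hz' k).
assert (Hzb : forall k, Cmod (z k) <= Series (fun m => Series (c k m))).
{ intros k. unfold z. destruct (Hz' k) as [l Hl]; simpl.
  assert (Hwe : ex_series (fun m => Cmod (w k m))).
  { apply (ex_series_le (fun m => Cmod (w k m)) (fun m => Series (c k m))); [|apply HWex].
    intros m. change (Rabs (Cmod (w k m)) <= Series (c k m)).
    rewrite Rabs_pos_eq; [apply Hwb|apply Cmod_ge_0]. }
  eapply Rle_trans. apply Cseries_bound; eauto.
  apply Series_le; [|apply HWex]. intros m; split; [apply Cmod_ge_0|apply Hwb]. }
exists z. split.
{ intros k. exists (w k). split.
  - intros m. exact (proj2_sig (Hw k m)).
  - exact (proj2_sig (Hz' k)). }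
assert (HB : forall N, sum_n (fun k => Cmod (z k) * eta ^ k) N <= l1_eta_norm eta x * l1_eta_norm eta y).
{ intros N.
  pose a := fun m => Cmod (x m) * eta ^ m. pose b := fun n => Cmod (y n) * eta ^ n.
  assert (Hd : forall k m, ex_series (fun n => eta ^ k * c k m n)).
  { intros; apply exs_scal, Hcex. }
  assert (Hdk : forall k m, Series (fun n => eta ^ k * c k m n) = eta ^ k * Series (c k m)).
  { intros; apply Series_scal_l. }
  assert (Hin := fun m => Series_sum_n (fun k n => eta ^ k * c k m n) N (fun k => Hd k m)).
  simpl in Hin.
  assert (Hinb : forall m n, sum_n (fun k => eta ^ k * c k m n) N <= a m * b n).
  { intros m n. rewrite sum_n_Reals.
    replace (sum_f_R0 (fun k => eta ^ k * c k m n) N) with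
      (Ax m * Ay n * sum_f_R0 (fun k => Rabs (alpha m n k) * eta ^ k) N).
    2:{ rewrite scal_sum. apply PartSum.sum_eq. intros; unfold c; ring. }
    replace (a m * b n) with (Ax m * Ay n * eta ^ (m + n)%N).
    2:{ unfold a, b, Ax, Ay. rewrite pow_add. ring. }
    apply Rmult_le_compat_l. apply Rmult_le_pos; auto. apply Hsa. }
  assert (Hinb0 : forall m n, 0 <= sum_n (fun k => eta ^ k * c k m n) N).
  { intros m n. rewrite sum_n_Reals. apply cond_pos_sum. intros; apply Rmult_le_pos; auto. }
  assert (Hm : forall m, Series (fun n => sum_n (fun k => eta ^ k * c k m n) N) <= a m * Series b).
  { intros m. rewrite <- Series_scal_l. apply Series_le; [intros; split; auto|apply exs_scal, Hy]. }
  assert (Hm0 : forall m, 0 <= Series (fun n => sum_n (fun k => eta ^ k * c k m n) N)).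
  { intros m. apply Series_ge0; auto. apply (proj1 (Hin m)). }
  assert (Hout := Series_sum_n (fun k m => Series (fun n => eta ^ k * c k m n)) N).
  simpl in Hout. destruct Hout as [_ Hout].
  { intros k. eapply ex_series_ext; [|apply (exs_scal (eta ^ k) _ (HWex k))].
    intros m; simpl. now rewrite Hdk. }
  apply Rle_trans with (sum_n (fun k => Series (fun m => Series (fun n => eta ^ k * c k m n))) N).
  { rewrite !sum_n_Reals. apply sum_Rle. intros k _.
    rewrite (Series_ext _ _ (fun m => Hdk k m)) Series_scal_l.
    generalize (Hzb k) (Hp0 k); nra. }
  rewrite Hout.
  rewrite (Series_ext _ _ (fun m => proj2 (Hin m))).
  apply Rle_trans with (Series (fun m => a m * Series b)).
  { apply Series_le; [intros; split; auto|apply ex_series_scal_r, Hx]. }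
  rewrite Series_scal_r. unfold l1_eta_norm. right; reflexivity. }
destruct (bounded_series _ _ (fun k => Rmult_le_pos _ _ (Cmod_ge_0 _) (Hp0 k)) HB) as [H1 H2].
split; assumption.
Qed.
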